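(* Let $(\Delta,\delta)$ be a building of type $(W,S)$ and let $G$ be a group acting on $\Delta$ by type-preserving automorphisms such that the action is Weyl-transitive. Let $a$ and $b$ be two simplices with residues $\mathcal{A}$ and $\mathcal{B}$ respectively. Then: (1) the stabilizer $G_b$ acts transitively on the set of simplices of the same type as $a$ whose residues $\mathcal{R}$ satisfy $\min\delta(\mathcal{B},\mathcal{R})=\min\delta(\mathcal{B},\mathcal{A})$; (2) the subgroup $G_a\cap G_b$ acts transitively on $\operatorname{proj}_{\mathcal{A}}(\mathcal{B})$, on $\operatorname{proj}_{\mathcal{B}}(\mathcal{A})$, and on the set of ordered pairs $(x,y)\in\operatorname{proj}_{\mathcal{A}}(\mathcal{B})\times\operatorname{proj}_{\mathcal{B}}(\mathcal{A})$ with $\delta(x,y)=\min\delta(\mathcal{A},\mathcal{B})$.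
   Context: A building of type $(W,S)$ ($S$ finite, $\ell$ the length function) is a set $\Delta$ of chambers with a Weyl distance $\delta:\Delta\times\Delta\to W$ satisfying the standard axioms. For $J\subseteq S$ let $W_J=\langle J\rangle$; $J$ is spherical if $W_J$ is finite. The $J$-residue of a chamber $x$ is $R_J(x)=\{y\in\Delta:\delta(x,y)\in W_J\}$. The building is viewed as a simplicial complex whose simplices are the spherical residues (ordered by reverse inclusion; chambers are the maximal simplices); the simplex corresponding to a residue of type $J$ has cotype $J$, and simplices have the same type iff they have the same cotype. An automorphism is type-preserving if $\delta(gx,gy)=\delta(x,y)$ for all chambers $x,y$. A group $G$ of such automorphisms is Weyl-transitive if for all chambers $x,y,x',y'$ with $\delta(x,y)=\delta(x',y')$ there is $g\in G$ with $g.x=x'$, $g.y=y'$. $G_b$ denotes the stabilizer of the simplex $b$. For a residue $\mathcal{R}$ and a chamber $x$, $\operatorname{proj}_{\mathcal{R}}(x)$ is the unique chamber of $\mathcal{R}$ at minimal gallery distance from $x$; for residues $\mathcal{A},\mathcal{B}$, $\operatorname{proj}_{\mathcal{B}}(\mathcal{A})=\{\operatorname{proj}_{\mathcal{B}}(x):x\in\mathcal{A}\}$. The set $\delta(\mathcal{A},\mathcal{B})=\{\delta(x,y):x\in\mathcal{A},y\in\mathcal{B}\}$ has a unique element of minimal length, denoted $\min\delta(\mathcal{A},\mathcal{B})$. *)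

(* Defs.v *)
(* Buildings of type (W,S) via the W-metric (Weyl distance)
   definition, with (W,S) a Coxeter system given by its presentation. *)
From Stdlib Require Import List Arith.
Import ListNotations.
Set Implicit Arguments.

Record group := Group {
  gcar :> Type;
  gmul : gcar -> gcar -> gcar;
  gone : gcar;
  ginv : gcar -> gcar;
  gmulA : forall x y z, gmul x (gmul y z) = gmul (gmul x y) z;
  gmul1l : forall x, gmul gone x = x;
  gmul1r : forall x, gmul x gone = x;
  gmulVl : forall x, gmul (ginv x) x = gone;
  gmulVr : forall x, gmul x (ginv x) = gone }.
Arguments gmul {g}.
Arguments gone {g}.
Arguments ginv {g}.

Fixpoint gpow (G : group) (x : G) (n : nat) : G :=
  match n with 0 => gone | S n => gmul x (gpow G x n) end.

Arguments gpow {G}.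
Definition gprod (G : group) (l : list G) : G := fold_right gmul gone l.

Arguments gprod {G}.
Definition ghom (G H : group) (phi : G -> H) : Prop :=
  forall x y, phi (gmul x y) = gmul (phi x) (phi y).

(* (W,S) is a Coxeter system: S is a finite set of involutions generating W,
   and W has the presentation < S | (st)^{m_st} = 1 >, expressed by the
   universal property: every map f from S to a group H respecting the
   relations (st)^n = 1 valid in W extends to a homomorphism W -> H. *)
Arguments ghom {G H}.
Record coxeter := Coxeter {
  cW :> group;
  cS : list cW;
  cS_inv : forall s, In s cS -> gmul s s = gone;
  cS_ne1 : forall s, In s cS -> s <> gone;
  cS_gen : forall w : cW, exists l, Forall (fun s => In s cS) l /\ gprod l = w;
  cS_univ : forall (H : group) (f : cW -> H),
     (forall s t, In s cS -> In t cS -> forall n,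
         gpow (gmul s t) n = gone -> gpow (gmul (f s) (f t)) n = gone) ->
     exists phi : cW -> H, ghom phi /\ forall s, In s cS -> phi s = f s }.

Section Coxeter.
Variable C : coxeter.

Definition len_le (w : C) (n : nat) : Prop :=
  exists l, Forall (fun s => In s (cS C)) l /\ length l <= n /\ gprod l = w.

Definition is_len (w : C) (n : nat) : Prop :=
  len_le w n /\ forall m, len_le w m -> n <= m.

Definition ell_le (w w' : C) : Prop := forall n, len_le w' n -> len_le w n.

Definition subS (J : C -> Prop) : Prop := forall s, J s -> In s (cS C).

Definition inWJ (J : C -> Prop) (w : C) : Prop :=
  exists l, Forall J l /\ gprod l = w.

Definition spherical (J : C -> Prop) : Prop :=
  exists l : list C, forall w, inWJ J w -> In w l.
End Coxeter.
Arguments len_le {C}. Arguments is_len {C}. Arguments ell_le {C}.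
Arguments subS {C}. Arguments inWJ {C}. Arguments spherical {C}.

Record building (C : coxeter) := Building {
  Ch :> Type;
  delta : Ch -> Ch -> C;
  Ch_inh : inhabited Ch;
  WD1 : forall x y, delta x y = gone <-> x = y;
  WD2 : forall (s : C) x y x', In s (cS C) -> delta x' x = s ->
          (delta x' y = gmul s (delta x y) \/ delta x' y = delta x y) /\
          (forall n, is_len (delta x y) n -> is_len (gmul s (delta x y)) (S n) ->
                     delta x' y = gmul s (delta x y));
  WD3 : forall (s : C) x y, In s (cS C) ->
          exists x', delta x' x = s /\ delta x' y = gmul s (delta x y) }.
Arguments delta {C} b _ _.

Section Building.
Variable C : coxeter.
Variable B : building C.

Definition chset := B -> Prop.

Definition is_residue (J : C -> Prop) (R : chset) : Prop :=
  exists x : B, forall y, R y <-> inWJ J (delta B x y).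

(* simplices = spherical residues (identified with their sets of chambers) *)
Definition simplex (R : chset) : Prop :=
  exists J, subS J /\ spherical J /\ is_residue J R.

(* same type (= same cotype) *)
Definition same_type (R R' : chset) : Prop :=
  exists J, subS J /\ spherical J /\ is_residue J R /\ is_residue J R'.

Inductive gal_le : B -> B -> nat -> Prop :=
  | gal_refl : forall x n, gal_le x x n
  | gal_step : forall x y z n, In (delta B x y) (cS C) -> gal_le y z n ->
                 gal_le x z (S n).

Definition gdist_le (x z y : B) : Prop := forall n, gal_le x y n -> gal_le x z n.

Definition is_proj (R : chset) (x z : B) : Prop :=
  R z /\ forall y, R y -> gdist_le x z y.

Definition proj_set (R A : chset) : chset :=
  fun z => exists x, A x /\ is_proj R x z.

Definition delta_set (A R : chset) (w : C) : Prop :=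
  exists x y, A x /\ R y /\ delta B x y = w.

Definition is_min_delta (A R : chset) (w : C) : Prop :=
  delta_set A R w /\ forall w', delta_set A R w' -> ell_le w w'.

Definition same_min_delta (A R A' R' : chset) : Prop :=
  exists w, is_min_delta A R w /\ is_min_delta A' R' w.
End Building.

Section Action.
Variable C : coxeter.
Variable B : building C.
Variable G : group.
Variable act : G -> B -> B.

Definition is_action : Prop :=
  (forall x, act gone x = x) /\ (forall g h x, act (gmul g h) x = act g (act h x)).

Definition type_preserving : Prop :=
  forall g x y, delta B (act g x) (act g y) = delta B x y.

Definition weyl_transitive : Prop :=
  forall x y x' y', delta B x y = delta B x' y' ->
    exists g, act g x = x' /\ act g y = y'.

Definition img (g : G) (R : chset B) : chset B := fun y => exists x, R x /\ act g x = y.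

Definition set_eq (R R' : chset B) : Prop := forall y, R y <-> R' y.

Definition stab (R : chset B) (g : G) : Prop := set_eq (img g R) R.
End Action.
Arguments chset {C} B.
Arguments is_residue {C B}. Arguments simplex {C B}. Arguments same_type {C B}.
Arguments gdist_le {C B}. Arguments is_proj {C B}. Arguments proj_set {C B}.
Arguments delta_set {C B}. Arguments is_min_delta {C B}. Arguments same_min_delta {C B}.
Arguments is_action {C B G}. Arguments type_preserving {C B G}.
Arguments weyl_transitive {C B G}. Arguments img {C B G}. Arguments set_eq {C B}.
Arguments stab {C B G}.

(* Main.v *)
Require Import Defs.
From Stdlib Require Import List Arith.
From Stdlib Require Import Lia Bool Classical ClassicalEpsilon FunctionalExtensionality.
Import ListNotations.

Set Implicit Arguments.

Arguments gmulA {g} x y z. Arguments gmul1l {g} x. Arguments gmul1r {g} x. Arguments gmulVl {g} x. Arguments gmulVr {g} x.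

Section GroupLemmas.
Context {G : group}.
Implicit Types x y z : G.

Lemma gmul_cancel_l x y z : gmul x y = gmul x z -> y = z.
Proof.
  intro H. rewrite <- (gmul1l y), <- (gmul1l z), <- (gmulVl x), <- !gmulA, H. reflexivity.
Qed.
Lemma gmul_cancel_r x y z : gmul y x = gmul z x -> y = z.
Proof.
  intro H. rewrite <- (gmul1r y), <- (gmul1r z), <- (gmulVr x), !gmulA, H. reflexivity.
Qed.
Lemma ginv_unique x y : gmul x y = gone -> ginv x = y.
Proof.
  intro H. apply (gmul_cancel_l x). rewrite gmulVr. auto.
Qed.
Lemma ginv_ginv x : ginv (ginv x) = x.
Proof. apply ginv_unique. apply gmulVl. Qed.
Lemma ginv_one : ginv (@gone G) = gone.
Proof. apply ginv_unique. apply gmul1l. Qed.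
Lemma ginv_mul x y : ginv (gmul x y) = gmul (ginv y) (ginv x).
Proof.
  apply ginv_unique. rewrite gmulA, <- (gmulA x y), gmulVr, gmul1r, gmulVr. auto.
Qed.
Lemma gmulKl x y : gmul (ginv x) (gmul x y) = y.
Proof. rewrite gmulA, gmulVl, gmul1l; auto. Qed.
Lemma gmulKr x y : gmul x (gmul (ginv x) y) = y.
Proof. rewrite gmulA, gmulVr, gmul1l; auto. Qed.
Lemma gmulKl' x y : gmul (gmul y x) (ginv x) = y.
Proof. rewrite <- gmulA, gmulVr, gmul1r; auto. Qed.
Lemma gmulKr' x y : gmul (gmul y (ginv x)) x = y.
Proof. rewrite <- gmulA, gmulVl, gmul1r; auto. Qed.
Lemma inv_of_invol x : gmul x x = gone -> ginv x = x.
Proof. apply ginv_unique. Qed.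

Lemma gpow_add x m n : gpow x (m + n) = gmul (gpow x m) (gpow x n).
Proof. induction m; simpl. rewrite gmul1l; auto. rewrite IHm, gmulA; auto. Qed.
Lemma gpow_S' x n : gpow x (S n) = gmul (gpow x n) x.
Proof.
  replace (S n) with (n + 1) by lia. rewrite gpow_add. simpl. rewrite gmul1r. auto.
Qed.
Lemma gpow_mul x m n : gpow x (m * n) = gpow (gpow x m) n.
Proof.
  revert m; induction n; intros m; simpl. rewrite Nat.mul_0_r; auto.
  rewrite Nat.mul_succ_r, gpow_add, IHn.
  clear IHn. induction n; simpl. rewrite gmul1l, gmul1r; auto.
  rewrite <- gmulA, IHn, gmulA. auto.
Qed.

Lemma gprod_app (l1 l2 : list G) : gprod (l1 ++ l2) = gmul (gprod l1) (gprod l2).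
Proof. induction l1; simpl. rewrite gmul1l; auto. rewrite IHl1, gmulA; auto. Qed.
End GroupLemmas.

Set Implicit Arguments.

Lemma min_nat (P : nat -> Prop) : (exists n, P n) -> exists n, P n /\ forall m, P m -> n <= m.
Proof.
  intros [n Hn]. revert Hn. pattern n. apply (well_founded_ind lt_wf). clear n.
  intros n IH Hn. destruct (classic (exists m, P m /\ m < n)) as [[m [Hm1 Hm2]]|Hno].
  - apply (IH m Hm2 Hm1).
  - exists n; split; auto. intros m Hm. destruct (le_lt_dec n m); auto.
    exfalso; apply Hno; eauto.
Qed.

Arguments cS_gen {_} w. Arguments cS_inv {_} s _. Arguments cS_ne1 {_} s _.
Section Cox.
Variable C : coxeter.
Notation W := (cW C).
Notation SS := (fun s => In s (cS C)).

Lemma Sinv s : In s (cS C) -> ginv s = s.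
Proof. intro H. apply inv_of_invol, cS_inv; auto. Qed.

Lemma gprod_rev (l : list W) : Forall SS l -> gprod (rev l) = ginv (gprod l).
Proof.
  induction l; simpl; intros H. rewrite ginv_one; auto.
  inversion H; subst. rewrite gprod_app, IHl by auto. rewrite ginv_mul, (Sinv a) by auto. simpl. rewrite gmul1r; auto.
Qed.

Lemma ex_is_len (w : W) : exists n, is_len w n.
Proof.
  destruct (cS_gen w) as [l [Hl Hw]].
  destruct (min_nat (fun n => len_le w n)) as [n [Hn Hmin]].
  - exists (length l). exists l; auto.
  - exists n; split; auto.
Qed.

Definition L (w : W) : nat := proj1_sig (constructive_indefinite_description _ (ex_is_len w)).
Lemma L_spec w : is_len w (L w).
Proof. unfold L. destruct constructive_indefinite_description; auto. Qed.

Lemma len_le_L w n : len_le w n <-> L w <= n.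
Proof.
  destruct (L_spec w) as [[l [H1 [H2 H3]]] H4]. split; intros H.
  - apply H4; auto.
  - exists l; split; auto; split; auto; lia.
Qed.
Lemma is_len_L w n : is_len w n <-> L w = n.
Proof.
  split; intros H.
  - destruct H as [H1 H2]. destruct (L_spec w) as [H3 H4].
    apply Nat.le_antisymm; auto.
  - subst; apply L_spec.
Qed.
Lemma ell_le_L w w' : ell_le w w' <-> L w <= L w'.
Proof.
  split; intros H.
  - apply len_le_L, H, len_le_L; auto.
  - intros n Hn. apply len_le_L. apply len_le_L in Hn. lia.
Qed.
Lemma L_word (l : list W) : Forall SS l -> L (gprod l) <= length l.
Proof. intros H. apply len_le_L. exists l; auto. Qed.
Lemma redword w : exists l, Forall SS l /\ length l = L w /\ gprod l = w.
Proof.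
  destruct (L_spec w) as [[l [H1 [H2 H3]]] H4]. exists l; split; auto; split; auto.
  apply Nat.le_antisymm; auto. apply H4. exists l; auto.
Qed.
Lemma L_inv w : L (ginv w) = L w.
Proof.
  assert (forall w, L (ginv w) <= L w).
  { intros v. destruct (redword v) as [l [H1 [H2 H3]]]. subst.
    rewrite <- gprod_rev; auto. rewrite <- H2, <- length_rev. apply L_word.
    apply Forall_rev; auto. }
  apply Nat.le_antisymm; auto. specialize (H (ginv w)). rewrite ginv_ginv in H. auto.
Qed.
Lemma L_one : L gone = 0.
Proof. assert (H := L_word (l:=[]) (Forall_nil _)). simpl in H. lia. Qed.
Lemma L_zero w : L w = 0 -> w = gone.
Proof. intros H. destruct (redword w) as [l [H1 [H2 H3]]]. destruct l; simpl in *; try lia. auto. Qed.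
Lemma L_mul u v : L (gmul u v) <= L u + L v.
Proof.
  destruct (redword u) as [l [H1 [H2 H3]]]. destruct (redword v) as [l' [H1' [H2' H3']]].
  subst. rewrite <- gprod_app, <- H2, <- H2', <- length_app. apply L_word. apply Forall_app; auto.
Qed.
Lemma L_S s : In s (cS C) -> L s = 1.
Proof.
  intros H. assert (L s <= 1). { replace s with (gprod [s]) by (simpl; apply gmul1r).
  apply L_word; auto. }
  destruct (L s) eqn:E; try lia. apply L_zero in E. exfalso; apply (cS_ne1 s); auto.
Qed.
Lemma L_mulS_l s w : In s (cS C) -> L (gmul s w) <= S (L w).
Proof. intros H. pose proof (L_mul s w). rewrite (L_S s H) in H0; lia. Qed.
Lemma L_mulS_r s w : In s (cS C) -> L (gmul w s) <= S (L w).
Proof. intros H. pose proof (L_mul w s). rewrite (L_S s H) in H0; lia. Qed.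
Lemma L_mulS_l' s w : In s (cS C) -> L w <= S (L (gmul s w)).
Proof. intros H. pose proof (@L_mulS_l s (gmul s w) H). rewrite gmulA, cS_inv, gmul1l in H0; auto. Qed.
Lemma L_mulS_r' s w : In s (cS C) -> L w <= S (L (gmul w s)).
Proof. intros H. pose proof (@L_mulS_r s (gmul w s) H). rewrite <- gmulA, cS_inv, gmul1r in H0; auto. Qed.

End Cox.

Unset Implicit Arguments.

Definition eqb {T : Type} (x y : T) : bool :=
  if excluded_middle_informative (x = y) then true else false.
Lemma eqb_true {T} (x y : T) : eqb x y = true <-> x = y.
Proof. unfold eqb; destruct excluded_middle_informative; split; congruence. Qed.
Lemma eqb_false {T} (x y : T) : eqb x y = false <-> x <> y.
Proof. unfold eqb; destruct excluded_middle_informative; split; congruence. Qed.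
Lemma eqb_iff {T T'} (x y : T) (x' y' : T') : (x = y <-> x' = y') -> eqb x y = eqb x' y'.
Proof.
  intros H. unfold eqb. destruct excluded_middle_informative, excluded_middle_informative; tauto.
Qed.
Lemma eqb_refl' {T} (x : T) : eqb x x = true.
Proof. apply eqb_true; auto. Qed.

Fixpoint xsum (n : nat) (F : nat -> bool) : bool :=
  match n with 0 => false | S n => xorb (xsum n F) (F n) end.

Lemma xsum_ext n F G : (forall k, k < n -> F k = G k) -> xsum n F = xsum n G.
Proof. induction n; simpl; intros H; auto. rewrite IHn, H; auto. Qed.
Lemma xsum_xor n F G : xsum n (fun k => xorb (F k) (G k)) = xorb (xsum n F) (xsum n G).
Proof.
  induction n; simpl; auto. rewrite IHn.
  destruct (xsum n F), (xsum n G), (F n), (G n); auto.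
Qed.
Lemma xsum_shift1 n F : xsum n (fun k => F (S k)) = xorb (xsum n F) (xorb (F 0) (F n)).
Proof.
  induction n; simpl. destruct (F 0); auto. rewrite IHn.
  destruct (xsum n F), (F 0), (F n), (F (S n)); auto.
Qed.
Lemma xsum_periodic n F : (forall k, F (n + k) = F k) ->
  forall k0, xsum n (fun i => F (k0 + i)) = xsum n F.
Proof.
  intros HP k0. induction k0; simpl; auto.
  rewrite <- IHk0. change (xsum n (fun i => F (S k0 + i)) = xsum n (fun i => F (k0 + i))).
  assert (H := xsum_shift1 n (fun i => F (k0+i))). cbv beta in H.
  rewrite (xsum_ext n (fun i => F (S k0 + i)) (fun k => F (k0 + S k))) by (intros; f_equal; lia).
  rewrite H.
  replace (k0 + n) with (n + k0) by lia. rewrite HP, Nat.add_0_r.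
  destruct (xsum n (fun i => F (k0 + i))), (F k0); auto.
Qed.
Lemma xsum_add m n F : xsum (m + n) F = xorb (xsum m F) (xsum n (fun k => F (m + k))).
Proof.
  induction n; simpl. rewrite Nat.add_0_r; destruct (xsum m F); auto.
  rewrite Nat.add_succ_r; simpl. rewrite IHn.
  destruct (xsum m F), (xsum n (fun k => F (m + k))), (F (m + n)); auto.
Qed.
Lemma xsum_pair n F : xsum n (fun i => xorb (F (2*i)) (F (2*i+1))) = xsum (2*n) F.
Proof.
  induction n. simpl; auto.
  replace (2 * S n) with (S (S (2*n))) by lia. cbn [xsum]. rewrite IHn.
  replace (2*n+1) with (S (2*n)) by lia.
  destruct (xsum (2*n) F), (F (2*n)), (F (S (2*n))); auto.
Qed.
Lemma xsum_self_periodic n F : (forall k, F (n + k) = F k) ->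
  xsum n (fun i => xorb (F (2*i)) (F (2*i+1))) = false.
Proof.
  intros HP. rewrite xsum_pair. replace (2*n) with (n+n) by lia. rewrite xsum_add.
  rewrite (xsum_ext n (fun k => F (n + k)) F) by auto. destruct (xsum n F); auto.
Qed.

Definition Z2 : group.
Proof.
  refine (@Group bool xorb false (fun x => x) _ _ _ _ _).
  - intros; destruct x, y, z; auto.
  - intros; destruct x; auto.
  - intros; destruct x; auto.
  - intros; destruct x; auto.
  - intros; destruct x; auto.
Defined.

Section Eta.
Variable C : coxeter.
Notation W := (cW C).
Notation SS := (fun s => In s (cS C)).

Definition cj (a r : W) : W := gmul (gmul a r) (ginv a).

Lemma cj_mul a b r : cj (gmul a b) r = cj a (cj b r).
Proof. unfold cj. rewrite ginv_mul, !gmulA. auto. Qed.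
Lemma cj_one r : cj gone r = r.
Proof. unfold cj. rewrite ginv_one, gmul1l, gmul1r. auto. Qed.
Lemma cj_inv a r : cj (ginv a) (cj a r) = r.
Proof. rewrite <- cj_mul, gmulVl, cj_one. auto. Qed.
Lemma cj_inv' a r : cj a (cj (ginv a) r) = r.
Proof. rewrite <- cj_mul, gmulVr, cj_one. auto. Qed.

Definition Hcar := (W * (W -> bool))%type.
Definition hmul (x y : Hcar) : Hcar :=
  (gmul (fst x) (fst y), fun r => xorb (snd y r) (snd x (cj (fst y) r))).
Definition hone : Hcar := (gone, fun _ => false).
Definition hinv (x : Hcar) : Hcar := (ginv (fst x), fun r => snd x (cj (ginv (fst x)) r)).

Lemma pair_eq (a a' : W) (f f' : W -> bool) : a = a' -> (forall r, f r = f' r) -> (a, f) = (a', f').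
Proof. intros -> H. f_equal. apply functional_extensionality; auto. Qed.

Definition Hgrp : group.
Proof.
  refine (@Group Hcar hmul hone hinv _ _ _ _ _).
  - intros [a f] [b g] [c h]. unfold hmul; simpl. apply pair_eq. apply gmulA.
    intros r. rewrite cj_mul. destruct (h r), (g (cj c r)), (f (cj b (cj c r))); auto.
  - intros [a f]. unfold hmul; simpl. apply pair_eq. apply gmul1l. intros r; destruct (f r); auto.
  - intros [a f]. unfold hmul; simpl. apply pair_eq. apply gmul1r. intros r; rewrite cj_one; auto.
  - intros [a f]. unfold hmul, hinv, hone; simpl. apply pair_eq. apply gmulVl.
    intros r. rewrite cj_inv. destruct (f r); auto.
  - intros [a f]. unfold hmul, hinv, hone; simpl. apply pair_eq. apply gmulVr.
    intros r. destruct (f _); auto.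
Defined.

Lemma hpow (x : Hcar) n :
  @gpow Hgrp x n = (gpow (fst x) n, fun r => xsum n (fun k => snd x (cj (gpow (fst x) k) r))).
Proof.
  induction n. reflexivity.
  cbn [gpow]. change (hmul x (@gpow Hgrp x n) = (gmul (fst x) (gpow (fst x) n), fun r => xsum (S n) (fun k => snd x (cj (gpow (fst x) k) r)))).
  rewrite IHn. unfold hmul; simpl. apply pair_eq; auto.
Qed.

Definition fH (w : W) : Hgrp := (w, fun r => eqb r w).

Lemma Sinv' s : In s (cS C) -> ginv s = s.
Proof. apply Sinv. Qed.
Lemma SK s x : In s (cS C) -> gmul s (gmul s x) = x.
Proof. intros H. rewrite gmulA, cS_inv, gmul1l; auto. Qed.
Lemma SK' s x : In s (cS C) -> gmul (gmul x s) s = x.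
Proof. intros H. rewrite <- gmulA, cS_inv, gmul1r; auto. Qed.
Lemma cj_eq_self a x : cj a x = a <-> x = a.
Proof.
  unfold cj. split; intros H.
  - apply (gmul_cancel_l a). apply (gmul_cancel_r (ginv a)). rewrite H, gmulKl'. auto.
  - subst. apply gmulKl'.
Qed.
Lemma cj_inj a x y : cj a x = cj a y <-> x = y.
Proof. split; intros H. rewrite <- (cj_inv a x), H, cj_inv; auto. subst; auto. Qed.

Lemma rel_check (s t : W) n : In s (cS C) -> In t (cS C) -> gpow (gmul s t) n = gone ->
  forall r, xsum n (fun k => xorb (eqb (cj (gpow (gmul s t) k) r) t)
                                 (eqb (cj t (cj (gpow (gmul s t) k) r)) s)) = false.
Proof.
  intros Hs Ht Hn r. set (p := gmul s t) in *.
  set (rk := fun k => cj (gpow p k) r).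
  assert (Hrk : forall k, rk (S k) = cj p (rk k)).
  { intros k. unfold rk. simpl. rewrite cj_mul. auto. }
  assert (Hper : forall k, rk (n + k) = rk k).
  { intros k. unfold rk. rewrite gpow_add, Hn, gmul1l. auto. }
  assert (Hts : forall q, eqb (cj t q) s = eqb (cj p q) s).
  { intros q. apply eqb_iff. unfold p. rewrite cj_mul. symmetry. apply cj_eq_self. }
  rewrite (xsum_ext n _ (fun k => xorb (eqb (rk k) t) (eqb (rk (S k)) s))).
  2:{ intros k _. fold (rk k). rewrite Hts, Hrk. auto. }
  rewrite xsum_xor. rewrite (xsum_shift1 n (fun k => eqb (rk k) s)).
  replace (rk n) with (rk 0) by (rewrite <- (Nat.add_0_r n) at 1; symmetry; apply Hper).
  replace (xorb (eqb (rk 0) s) (eqb (rk 0) s)) with false by (destruct (eqb (rk 0) s); auto).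
  rewrite xorb_false_r, <- xsum_xor.
  set (T := fun k => xorb (eqb (rk k) t) (eqb (rk k) s)).
  assert (HTper : forall k, T (n + k) = T k) by (intros; unfold T; rewrite Hper; auto).
  assert (Hpinv : ginv p = gmul t s).
  { unfold p. rewrite ginv_mul, (Sinv' t Ht), (Sinv' s Hs). auto. }
  set (G := fun j => eqb (gpow p j) p).
  assert (Gper : forall j, G (n + j) = G j).
  { intros j; unfold G. rewrite gpow_add, Hn, gmul1l; auto. }
  assert (E1' : forall j, eqb (gpow p j) gone = G (S j)).
  { intros j. unfold G. apply eqb_iff. rewrite gpow_S'. split; intros H. rewrite H, gmul1l; auto.
    apply (gmul_cancel_r p). rewrite H, gmul1l; auto. }
  assert (Hcomm : forall (u : W), gmul u (ginv p) = gmul p u -> forall i,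
            cj (gpow p i) u = gmul (gpow p (2*i)) u).
  { intros u Hu. assert (Hu' : forall i, gmul u (ginv (gpow p i)) = gmul (gpow p i) u).
    { induction i. simpl. rewrite ginv_one, gmul1l, gmul1r; auto.
      simpl. rewrite ginv_mul, gmulA, IHi, <- gmulA, Hu, gmulA.
      rewrite <- gpow_S'. simpl. auto. }
    intros i. unfold cj. rewrite <- gmulA, Hu'. replace (2*i) with (i+i) by lia.
    rewrite gpow_add, gmulA; auto. }
  assert (Ht1 : gmul t (ginv p) = gmul p t).
  { rewrite Hpinv, SK by auto. unfold p. rewrite SK'; auto. }
  assert (Hs1 : gmul s (ginv p) = gmul p s).
  { rewrite Hpinv. unfold p. apply gmulA. }
  assert (cancelr : forall (x y u : W), In u (cS C) -> (gmul x u = y <-> x = gmul y u)).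
  { intros x y u Hu. split; intros H. subst; rewrite SK'; auto. subst; rewrite SK'; auto. }
  destruct (classic (exists k0, rk k0 = t \/ rk k0 = s)) as [[k0 Hk0]|Hno].
  - rewrite <- (xsum_periodic n T HTper k0).
    destruct Hk0 as [Hk0|Hk0].
    + assert (Hform : forall i, rk (k0 + i) = gmul (gpow p (2*i)) t).
      { intros i. unfold rk. rewrite Nat.add_comm, gpow_add, cj_mul. fold (rk k0). rewrite Hk0.
        apply Hcomm; auto. }
      rewrite (xsum_ext n _ (fun i => xorb (G (2*i)) (G (2*i+1)))).
      apply xsum_self_periodic; auto.
      intros i _. unfold T. rewrite Hform. rewrite xorb_comm. f_equal.
      * unfold G. apply eqb_iff. rewrite cancelr by auto. unfold p. tauto.
      * replace (2*i+1) with (S (2*i)) by lia. rewrite <- E1'. apply eqb_iff.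
        rewrite cancelr by auto. rewrite cS_inv by auto. tauto.
    + assert (Hform : forall i, rk (k0 + i) = gmul (gpow p (2*i)) s).
      { intros i. unfold rk. rewrite Nat.add_comm, gpow_add, cj_mul. fold (rk k0). rewrite Hk0.
        apply Hcomm; auto. }
      set (G' := fun j => G (S j)).
      rewrite (xsum_ext n _ (fun i => xorb (G' (2*i)) (G' (2*i+1)))).
      apply xsum_self_periodic; auto.
      { intros j. unfold G'. rewrite <- Nat.add_succ_r. apply (Gper (S j)). }
      intros i _. unfold T, G'. rewrite Hform. rewrite xorb_comm. f_equal.
      * rewrite <- E1'. apply eqb_iff. rewrite cancelr by auto. rewrite cS_inv by auto. tauto.
      * replace (S (2 * i + 1)) with (S (S (2*i))) by lia. rewrite <- E1'. apply eqb_iff.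
        rewrite cancelr by auto. rewrite gpow_S'. rewrite <- Hpinv. split; intros H.
        -- rewrite H, gmulVl; auto.
        -- apply (gmul_cancel_r p). rewrite H, gmulVl; auto.
  - rewrite (xsum_ext n _ (fun _ => false)). clear. induction n; simpl; auto. rewrite IHn; auto.
    intros k _. unfold T. assert (rk k <> t) by (intro; apply Hno; eauto).
    assert (rk k <> s) by (intro; apply Hno; eauto).
    rewrite (proj2 (eqb_false _ _) H), (proj2 (eqb_false _ _) H0). auto.
Qed.
End Eta.

Section EX.
Variable C : coxeter.
Notation W := (cW C).
Notation SS := (fun s => In s (cS C)).

Lemma phi_exists : exists phi : W -> Hgrp C, ghom phi /\ forall s, In s (cS C) -> phi s = fH C s.
Proof.
  apply cS_univ. intros s t Hs Ht n Hn.
  change (@gpow (Hgrp C) (hmul C (fH C s) (fH C t)) n = hone C).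
  rewrite hpow. unfold hone, hmul, fH; simpl. apply pair_eq. auto.
  intros r. apply rel_check; auto.
Qed.

Definition phi : W -> Hgrp C := proj1_sig (constructive_indefinite_description _ phi_exists).
Lemma phi_spec : ghom phi /\ forall s, In s (cS C) -> phi s = fH C s.
Proof. unfold phi. destruct constructive_indefinite_description; auto. Qed.
Lemma phi_mul u v : phi (gmul u v) = hmul C (phi u) (phi v).
Proof. apply (proj1 phi_spec). Qed.
Lemma phi_S s : In s (cS C) -> phi s = fH C s.
Proof. apply (proj2 phi_spec). Qed.
Lemma phi_one : phi gone = hone C.
Proof.
  apply (@gmul_cancel_l (Hgrp C) (phi gone)). change (hmul C (phi gone) (phi gone) = hmul C (phi gone) (hone C)).
  rewrite <- phi_mul, gmul1l. change (phi gone = @gmul (Hgrp C) (phi gone) gone). rewrite gmul1r. auto.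
Qed.
Lemma fst_phi w : fst (phi w) = w.
Proof.
  destruct (cS_gen w) as [l [Hl <-]]. induction l; simpl.
  - rewrite phi_one. auto.
  - inversion Hl; subst. rewrite phi_mul, phi_S by auto. unfold hmul; simpl. rewrite IHl; auto.
Qed.
Definition eta (w r : W) : bool := snd (phi w) r.
Lemma eta_mul u v r : eta (gmul u v) r = xorb (eta v r) (eta u (cj C v r)).
Proof. unfold eta. rewrite phi_mul. unfold hmul; simpl. rewrite fst_phi. auto. Qed.
Lemma eta_S s r : In s (cS C) -> eta s r = eqb r s.
Proof. intros H. unfold eta. rewrite phi_S; auto. Qed.
Lemma eta_ws w s : In s (cS C) -> eta (gmul w s) s = negb (eta w s).
Proof.
  intros H. rewrite eta_mul, eta_S, eqb_refl' by auto. unfold cj. rewrite Sinv, SK' by auto. auto.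
Qed.

Fixpoint refl (l : list W) : list W :=
  match l with [] => [] | s :: l' => cj C (ginv (gprod l')) s :: refl l' end.
Fixpoint xl (l : list W) (r : W) : bool :=
  match l with [] => false | x :: xs => xorb (eqb r x) (xl xs r) end.

Lemma eta_word l r : Forall SS l -> eta (gprod l) r = xl (refl l) r.
Proof.
  induction l; simpl; intros H.
  - unfold eta. rewrite phi_one. auto.
  - inversion H; subst. rewrite eta_mul, IHl, eta_S by auto. rewrite xorb_comm. f_equal.
    apply eqb_iff. split; intros E.
    + rewrite <- E. symmetry. apply cj_inv.
    + rewrite E. apply cj_inv'.
Qed.
Lemma xl_nodup l r : NoDup l -> (xl l r = true <-> In r l).
Proof.
  induction l as [|a l IHl]; simpl; intros H. split; intros; try discriminate; contradiction.
  apply NoDup_cons_iff in H. destruct H as [Ha Hl]. specialize (IHl Hl).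
  destruct (eqb r a) eqn:E.
  - rewrite eqb_true in E. subst r.
    assert (~ xl l a = true) by (intro E2; apply Ha; apply IHl; auto).
    destruct (xl l a); simpl; try tauto.
  - apply eqb_false in E. simpl. rewrite IHl. split; auto. intros [H'|H']; auto. congruence.
Qed.
Lemma In_refl x l : In x (refl l) -> exists p a q, l = p ++ a :: q /\ x = cj C (ginv (gprod q)) a.
Proof.
  induction l; simpl. tauto. intros [H|H].
  - exists [], a, l; auto.
  - destruct (IHl H) as [p [b [q [-> ->]]]]. exists (a :: p), b, q; auto.
Qed.
Lemma del p a q : In a (cS C) ->
  gmul (gprod (p ++ a :: q)) (cj C (ginv (gprod q)) a) = gprod (p ++ q).
Proof.
  intros H. rewrite !gprod_app. simpl. unfold cj. rewrite ginv_ginv.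
  rewrite <- !gmulA. f_equal. rewrite gmulKr, SK; auto.
Qed.

Lemma red_tail s l : Forall SS (s :: l) -> length (s :: l) = L C (gprod (s :: l)) ->
  length l = L C (gprod l).
Proof.
  intros H E. inversion H; subst. simpl in E.
  pose proof (@L_word C l H3). pose proof (L_mulS_l C s (gprod l) H2). lia.
Qed.

Lemma refl_nodup l : Forall SS l -> length l = L C (gprod l) -> NoDup (refl l).
Proof.
  induction l as [|s l IHl]; simpl; intros H E. constructor.
  pose proof (red_tail s l H E) as E'. inversion H; subst. constructor; auto.
  intros Hin. apply In_refl in Hin. destruct Hin as [p [a [q [Hl Hr]]]].
  assert (Ha : In a (cS C)) by (subst l; apply Forall_app in H3; destruct H3 as [_ H3]; inversion H3; auto).
  assert (Hd := del p a q Ha). rewrite <- Hl, <- Hr in Hd.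
  unfold cj in Hd. rewrite ginv_ginv in Hd. rewrite gmulA, gmulKr in Hd.
  assert (Hpq : Forall SS (p ++ q)) by (subst l; apply Forall_app in H3; destruct H3 as [H5 H6];
     inversion H6; apply Forall_app; auto).
  pose proof (@L_word C _ Hpq). rewrite <- Hd in H0.
  assert (length l = length (p ++ q) + 1) by (subst l; rewrite !length_app; simpl; lia).
  simpl in E. rewrite <- E in H0. lia.
Qed.

Lemma EXR l s : Forall SS l -> length l = L C (gprod l) -> In s (cS C) ->
  L C (gmul (gprod l) s) < L C (gprod l) ->
  exists p a q, l = p ++ a :: q /\ gmul (gprod l) s = gprod (p ++ q).
Proof.
  intros Hl E Hs Hlt. set (w := gprod l) in *.
  destruct (redword C (gmul w s)) as [l' [H1 [H2 H3]]].
  assert (Hu : eta (gmul w s) s = false).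
  { destruct (eta (gmul w s) s) eqn:Ee; auto. exfalso.
    rewrite <- H3, eta_word in Ee by auto. apply xl_nodup in Ee.
    2:{ apply refl_nodup; auto. rewrite H3; auto. }
    apply In_refl in Ee. destruct Ee as [p [a [q [Hl' Hr]]]].
    assert (Ha : In a (cS C)) by (subst l'; apply Forall_app in H1; destruct H1 as [_ H1]; inversion H1; auto).
    assert (Hd := del p a q Ha). rewrite <- Hl', <- Hr, H3, SK' in Hd by auto.
    assert (Hpq : Forall SS (p ++ q)) by (subst l'; apply Forall_app in H1; destruct H1 as [H5 H6];
       inversion H6; apply Forall_app; auto).
    pose proof (@L_word C _ Hpq). rewrite <- Hd in H.
    assert (length l' = length (p ++ q) + 1) by (subst l'; rewrite !length_app; simpl; lia).
    lia. }
  assert (Hw : eta w s = true).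
  { replace w with (gmul (gmul w s) s) by (apply SK'; auto). rewrite eta_ws, Hu; auto. }
  unfold w in Hw. rewrite eta_word in Hw by auto. apply xl_nodup in Hw.
  2:{ apply refl_nodup; auto. }
  apply In_refl in Hw. destruct Hw as [p [a [q [Hl' Hr]]]].
  exists p, a, q. split; auto.
  assert (Ha : In a (cS C)) by (subst l; apply Forall_app in Hl; destruct Hl as [_ Hl]; inversion Hl; auto).
  rewrite Hr. unfold w. rewrite Hl' at 1. apply del; auto.
Qed.
End EX.

Lemma split_app {X} (rd lv p q : list X) a : rd ++ lv = p ++ a :: q ->
  (exists m, rd = p ++ a :: m /\ q = m ++ lv) \/ (exists m, lv = m ++ a :: q /\ p = rd ++ m).
Proof.
  intros H. destruct (app_eq_app _ _ _ _ H) as [l [[H1 H2]|[H1 H2]]].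
  - destruct l as [|b m].
    + right. exists []. simpl in *. rewrite app_nil_r in *. subst. auto.
    + left. simpl in H2. inversion H2; subst. exists m; auto.
  - right. exists l; auto.
Qed.

Section Cox2.
Variable C : coxeter.
Notation W := (cW C).
Notation SS := (fun s => In s (cS C)).
Notation L := (L C).

Lemma gpow_false n : @gpow Z2 false n = false.
Proof. induction n; simpl; auto. Qed.

Lemma sgn_exists : exists sg : W -> Z2, ghom sg /\ forall s, In s (cS C) -> sg s = true.
Proof.
  apply (cS_univ C Z2 (fun _ => true)). intros. apply gpow_false.
Qed.

Lemma parity_word : exists sg : W -> bool, forall l, Forall SS l -> sg (gprod l) = Nat.odd (length l).
Proof.
  destruct sgn_exists as [sg [Hh Hs]]. exists sg. induction l; simpl; intros H.
  - assert (E : sg gone = xorb (sg gone) (sg gone)).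
    { change (sg gone = @gmul Z2 (sg gone) (sg gone)). rewrite <- Hh, gmul1l. auto. }
    destruct (sg gone); simpl in *; auto.
  - inversion H; subst. change (sg (gmul a (gprod l)) = Nat.odd (S (length l))).
    rewrite Hh. change (xorb (sg a) (sg (gprod l)) = Nat.odd (S (length l))).
    rewrite Hs, IHl by auto. rewrite Nat.odd_succ, <- Nat.negb_odd. auto.
Qed.

Lemma L_par_l s w : In s (cS C) -> L (gmul s w) = S (L w) \/ L w = S (L (gmul s w)).
Proof.
  intros Hs. destruct parity_word as [sg Hsg].
  destruct (redword C w) as [l [H1 [H2 H3]]]. destruct (redword C (gmul s w)) as [l' [H1' [H2' H3']]].
  assert (E1 := Hsg l H1). assert (E2 := Hsg l' H1'). assert (E3 := Hsg (s :: l) (ltac:(constructor; auto) : Forall SS (s :: l))).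
  simpl in E3. rewrite H3, <- H3', E2 in E3.
  rewrite Nat.odd_succ, <- Nat.negb_odd in E3.
  pose proof (L_mulS_l C s w Hs). pose proof (L_mulS_l' C s w Hs).
  assert (L (gmul s w) <> L w). { intros E. rewrite <- H2, <- H2', E in *. destruct (Nat.odd (length l)); discriminate. }
  lia.
Qed.
Lemma L_par_r s w : In s (cS C) -> L (gmul w s) = S (L w) \/ L w = S (L (gmul w s)).
Proof.
  intros Hs. rewrite <- (L_inv C (gmul w s)), <- (L_inv C w), ginv_mul, Sinv by auto.
  apply L_par_l; auto.
Qed.

Lemma EXL l s : Forall SS l -> length l = L (gprod l) -> In s (cS C) ->
  L (gmul s (gprod l)) < L (gprod l) ->
  exists p a q, l = p ++ a :: q /\ gmul s (gprod l) = gprod (p ++ q).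
Proof.
  intros Hl E Hs Hlt.
  assert (Hr : Forall SS (rev l)) by (apply Forall_rev; auto).
  assert (Er : length (rev l) = L (gprod (rev l))) by (rewrite length_rev, gprod_rev, L_inv; auto).
  assert (Hlt' : L (gmul (gprod (rev l)) s) < L (gprod (rev l))).
  { rewrite gprod_rev, <- (Sinv C s Hs), <- ginv_mul, !L_inv; auto. }
  destruct (EXR C (rev l) s Hr Er Hs Hlt') as [p [a [q [H1 H2]]]].
  exists (rev q), a, (rev p). split.
  - rewrite <- (rev_involutive l), H1. rewrite rev_app_distr. simpl. rewrite <- app_assoc. auto.
  - rewrite <- (ginv_ginv (gmul s (gprod l))), ginv_mul, (Sinv C s Hs), <- gprod_rev, H2 by auto.
    rewrite <- rev_app_distr. rewrite gprod_rev. auto.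
    rewrite H1 in Hr. apply Forall_app in Hr. destruct Hr as [Ha Hb]. inversion Hb. apply Forall_app; auto.
Qed.

Lemma DEL (P : W -> Prop) l : Forall P l -> Forall SS l -> L (gprod l) < length l ->
  exists l', Forall P l' /\ length l' < length l /\ gprod l' = gprod l.
Proof.
  induction l as [|x l0 IH] using rev_ind; simpl; intros HP HS Hlt. lia.
  apply Forall_app in HP, HS. destruct HP as [HP1 HP2], HS as [HS1 HS2]. inversion HS2; subst.
  inversion HP2; subst. rewrite length_app in Hlt; simpl in Hlt.
  destruct (le_lt_dec (length l0) (L (gprod l0))) as [Hr|Hr].
  - pose proof (@L_word C l0 HS1). assert (E : length l0 = L (gprod l0)) by lia.
    rewrite gprod_app in Hlt. simpl in Hlt. rewrite gmul1r in Hlt.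
    assert (L (gmul (gprod l0) x) < L (gprod l0)) by (destruct (L_par_r x (gprod l0)); auto; lia).
    destruct (EXR C l0 x HS1 E H1 H0) as [p [a [q [Hl Hd]]]].
    exists (p ++ q). subst l0. apply Forall_app in HP1. destruct HP1 as [Hp Hq]. inversion Hq; subst.
    split. apply Forall_app; auto. split. rewrite !length_app; simpl; lia.
    rewrite <- Hd, (gprod_app (p ++ a :: q) [x]). simpl. rewrite gmul1r. auto.
  - destruct (IH HP1 HS1 Hr) as [l' [G1 [G2 G3]]]. exists (l' ++ [x]). split.
    apply Forall_app; auto. split. rewrite !length_app; simpl; lia. rewrite !gprod_app, G3; auto.
Qed.

Section J.
Variable J : W -> Prop.
Hypothesis HJ : subS J.

Lemma WJ_one : inWJ J gone.
Proof. exists []; auto. Qed.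
Lemma WJ_mul u v : inWJ J u -> inWJ J v -> inWJ J (gmul u v).
Proof. intros [l [H1 <-]] [l' [H1' <-]]. exists (l ++ l'). rewrite gprod_app. split; auto. apply Forall_app; auto. Qed.
Lemma WJ_gen s : J s -> inWJ J s.
Proof. intros H. exists [s]. simpl. rewrite gmul1r; auto. Qed.
Lemma Forall_JS l : Forall J l -> Forall SS l.
Proof. intros H. eapply Forall_impl; [|apply H]. auto. Qed.
Lemma WJ_inv u : inWJ J u -> inWJ J (ginv u).
Proof.
  intros [l [H1 <-]]. exists (rev l). split. apply Forall_rev; auto. apply gprod_rev, Forall_JS; auto.
Qed.

Lemma Jred v : inWJ J v -> exists l, Forall J l /\ length l = L v /\ gprod l = v.
Proof.
  intros Hv. destruct (min_nat (fun n => exists l, Forall J l /\ length l = n /\ gprod l = v)) as [n [[l [H1 [H2 H3]]] Hmin]].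
  { destruct Hv as [l [H1 H2]]. exists (length l), l; auto. }
  exists l. split; auto. split; auto. subst.
  pose proof (@L_word C l (Forall_JS l H1)).
  destruct (le_lt_dec (length l) (L (gprod l))) as [Hr|Hr]. lia.
  destruct (DEL J l H1 (Forall_JS l H1) Hr) as [l' [H4 [H5 H6]]].
  assert (length l <= length l') by (apply Hmin; exists l'; auto). lia.
Qed.

Lemma red_prefix l x : Forall SS (l ++ [x]) -> length (l ++ [x]) = L (gprod (l ++ [x])) ->
  length l = L (gprod l).
Proof.
  intros H E. apply Forall_app in H. destruct H as [H1 H2]. inversion H2; subst.
  rewrite length_app, gprod_app in E. simpl in E. rewrite gmul1r in E.
  pose proof (@L_word C l H1). pose proof (L_mulS_r C x (gprod l) H3). lia.
Qed.

Definition rred (d : W) := forall t, J t -> L d < L (gmul d t).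
Definition lred (d : W) := forall t, J t -> L d < L (gmul t d).

Lemma C3 d : rred d -> forall v, inWJ J v -> L (gmul d v) = L d + L v.
Proof.
  intros Hd.
  destruct (min_nat (fun n => exists u, inWJ J u /\ L (gmul d u) = n)) as [n [[u0 [Hu0 E0]] Hmin]].
  { exists (L (gmul d gone)), gone. split; auto. apply WJ_one. }
  set (w0 := gmul d u0) in *.
  assert (A : forall l, Forall J l -> length l = L (gprod l) -> L (gmul w0 (gprod l)) = L w0 + length l).
  { induction l as [|t l' IH] using rev_ind; intros Hl El.
    - simpl. rewrite gmul1r. lia.
    - pose proof (Forall_JS _ Hl) as HlS.
      assert (El' := red_prefix l' t HlS El).
      apply Forall_app in Hl. destruct Hl as [Hl1 Hl2]. inversion Hl2; subst.
      specialize (IH Hl1 El'). rewrite length_app, gprod_app. simpl. rewrite gmul1r, gmulA.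
      assert (Ht : In t (cS C)) by auto.
      destruct (L_par_r t (gmul w0 (gprod l')) Ht) as [E|E]. lia. exfalso.
      destruct (redword C w0) as [r [Hr1 [Hr2 Hr3]]].
      assert (Hrl : Forall SS (r ++ l')) by (apply Forall_app; split; auto; apply Forall_JS; auto).
      assert (Erl : length (r ++ l') = L (gprod (r ++ l'))) by (rewrite length_app, gprod_app, Hr3, IH; lia).
      assert (Hlt : L (gmul (gprod (r ++ l')) t) < L (gprod (r ++ l'))) by (rewrite gprod_app, Hr3; lia).
      destruct (EXR C (r ++ l') t Hrl Erl Ht Hlt) as [p [a [q [Hs Hde]]]].
      destruct (split_app r l' p q a Hs) as [[m [Hm1 Hm2]]|[m [Hm1 Hm2]]].
      + (* deletion in w0 *)
        subst q r. rewrite gprod_app, !gprod_app in Hde. rewrite <- gprod_app in Hde.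
        set (w1 := gprod (p ++ m)) in *.
        assert (Hw1 : w1 = gmul d (gmul u0 (gmul (gmul (gprod l') t) (ginv (gprod l'))))).
        { rewrite Hr3 in Hde.
          assert (Hde' : gmul (gmul w0 (gprod l')) t = gmul w1 (gprod l'))
            by (rewrite Hde; unfold w1; rewrite gprod_app, gmulA; auto).
          transitivity (gmul (gmul (gmul w0 (gprod l')) t) (ginv (gprod l'))).
          rewrite Hde', gmulKl'. auto. unfold w0. rewrite !gmulA. auto. }
        assert (Hle : L (gmul d (gmul u0 (gmul (gmul (gprod l') t) (ginv (gprod l'))))) >= L w0).
        { apply Hmin. eexists; split; [|reflexivity].
          apply WJ_mul; auto. apply WJ_mul. apply WJ_mul. exists l'; auto. apply WJ_gen; auto.
          apply WJ_inv. exists l'; auto. }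
        rewrite <- Hw1 in Hle. unfold w1 in Hle.
        assert (Hpm : Forall SS (p ++ m)) by (apply Forall_app in Hr1; destruct Hr1 as [Hx Hy];
           inversion Hy; apply Forall_app; auto).
        pose proof (@L_word C _ Hpm). rewrite length_app in Hr2. simpl in Hr2. rewrite length_app in H.
        lia.
      + (* deletion in l' *)
        subst l' p. rewrite !gprod_app in Hde. rewrite Hr3 in Hde. rewrite <- gmulA in Hde.
        rewrite <- (gmulA w0 (gprod m)) in Hde. apply gmul_cancel_l in Hde. rewrite <- gprod_app in Hde.
        assert (Hmq : Forall SS (m ++ q)) by (apply Forall_JS in Hl1; apply Forall_app in Hl1;
           destruct Hl1 as [Hx Hy]; inversion Hy; apply Forall_app; auto).
        assert (E2 : gprod ((m ++ a :: q) ++ [t]) = gprod (m ++ q)).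
        { rewrite (gprod_app (m ++ a :: q) [t]), (gprod_app m q). simpl. rewrite gmul1r. auto. }
        pose proof (@L_word C _ Hmq). rewrite <- E2, <- El in H.
        rewrite !length_app in H. simpl in H. lia. }
  assert (Hd0 : d = w0).
  { destruct (Jred (ginv u0) (WJ_inv u0 Hu0)) as [l1 [Hl1 [El1 Gl1]]].
    assert (Ed : d = gmul w0 (gprod l1)) by (rewrite Gl1; unfold w0; rewrite gmulKl'; auto).
    destruct l1 as [|t l2] using rev_ind.
    - rewrite Ed. simpl. apply gmul1r.
    - exfalso. clear IHl2. rewrite <- Gl1 in El1.
      assert (HS := Forall_JS _ Hl1). assert (Hl1c := Hl1).
      assert (El2 := red_prefix l2 t HS El1).
      apply Forall_app in Hl1. destruct Hl1 as [Hl2 Ht]. assert (H1 : J t) by (inversion Ht; auto).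
      assert (E1 : gmul d t = gmul w0 (gprod l2)).
      { rewrite Ed, gprod_app. simpl. rewrite gmul1r, <- gmulA, SK'; auto. }
      specialize (Hd t H1). rewrite E1 in Hd. rewrite A in Hd by auto. rewrite Ed in Hd. rewrite A in Hd by auto.
      rewrite length_app in Hd. simpl in Hd. lia. }
  intros v Hv. destruct (Jred v Hv) as [l [Hl [El Gl]]]. subst v. rewrite Hd0, A; auto.
Qed.

Lemma C3L d : lred d -> forall u, inWJ J u -> L (gmul u d) = L u + L d.
Proof.
  intros Hd u Hu. rewrite <- L_inv, ginv_mul.
  rewrite C3. rewrite !L_inv. lia.
  intros t Ht. rewrite <- (L_inv C (gmul (ginv d) t)), ginv_mul, ginv_ginv, (Sinv C t (HJ t Ht)), !L_inv.
  apply Hd; auto.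
  apply WJ_inv; auto.
Qed.
End J.

Lemma DC (I J : W -> Prop) : subS I -> subS J -> forall d d',
  lred I d -> rred J d -> lred I d' -> rred J d' ->
  forall u v, inWJ I u -> inWJ J v -> gmul u d = gmul d' v -> d = d'.
Proof.
  intros HI HJ d d' Hl Hr Hl' Hr' u v Hu Hv E.
  destruct (Jred I HI u Hu) as [lu [H1 [H2 H3]]]. subst u.
  revert v Hv E. induction lu as [|s l1 IH]; intros v Hv E.
  - simpl in E. rewrite gmul1l in E. subst d.
    pose proof (C3 J HJ d' Hr' v Hv) as K1.
    assert (K2 : d' = gmul (gmul d' v) (ginv v)) by (rewrite gmulKl'; auto).
    pose proof (C3 J HJ (gmul d' v) Hr (ginv v) (WJ_inv J HJ v Hv)) as K3.
    rewrite <- K2, L_inv in K3. assert (K4 : L v = 0) by lia. apply L_zero in K4. subst v. rewrite gmul1r. auto.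
  - simpl in E. assert (HsI : I s) by (inversion H1; auto). assert (Hs : In s (cS C)) by auto.
    assert (Hl1 : Forall I l1) by (inversion H1; auto).
    assert (El1 : length l1 = L (gprod l1)) by (apply (red_tail C s l1); auto; apply (Forall_JS I HI); auto).
    assert (Hg1 : inWJ I (gprod l1)) by (exists l1; auto).
    assert (Hu2 : inWJ I (gmul s (gprod l1))) by (apply WJ_mul; auto; apply WJ_gen; auto).
    pose proof (C3L I HI d Hl _ Hu2) as K1. pose proof (C3L I HI d Hl _ Hg1) as K2.
    simpl in H2.
    destruct (Jred J HJ v Hv) as [lv [Hv1 [Hv2 Hv3]]].
    destruct (redword C d') as [rd [Hd1 [Hd2 Hd3]]].
    pose proof (C3 J HJ d' Hr' v Hv) as K3.
    assert (Hw : Forall SS (rd ++ lv)) by (apply Forall_app; split; auto; apply (Forall_JS J HJ); auto).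
    assert (Ew : length (rd ++ lv) = L (gprod (rd ++ lv))) by (rewrite length_app, gprod_app, Hd3, Hv3; lia).
    assert (Es : gmul s (gmul d' v) = gmul (gprod l1) d) by (rewrite <- E, <- gmulA, SK; auto).
    assert (Hlt : L (gmul s (gprod (rd ++ lv))) < L (gprod (rd ++ lv))).
    { rewrite gprod_app, Hd3, Hv3, Es, <- E. lia. }
    destruct (EXL (rd ++ lv) s Hw Ew Hs Hlt) as [p [a [q [Hs' Hde]]]].
    rewrite gprod_app, Hd3, Hv3 in Hde.
    destruct (split_app rd lv p q a Hs') as [[m [Hm1 Hm2]]|[m [Hm1 Hm2]]].
    + exfalso. subst q rd. rewrite app_assoc, gprod_app, Hv3, gmulA in Hde.
      apply gmul_cancel_r in Hde.
      assert (Hpm : Forall SS (p ++ m)) by (apply Forall_app in Hd1; destruct Hd1 as [Hx Hy];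
           inversion Hy; apply Forall_app; auto).
      pose proof (@L_word C _ Hpm). rewrite <- Hde in H.
      specialize (Hl' s HsI). rewrite <- Hd3 in Hl'.
      rewrite <- Hd2, !length_app in *. simpl in *. rewrite Hd3 in *. lia.
    + subst lv p. rewrite <- app_assoc, gprod_app, Hd3 in Hde.
      apply (IH Hg1 Hl1 El1 (gprod (m ++ q))).
      * exists (m ++ q). split; auto. apply Forall_app in Hv1. destruct Hv1 as [Hx Hy].
        inversion Hy. apply Forall_app; auto.
      * rewrite <- Es. exact Hde.
Qed.
End Cox2.

Section Bld.
Variable C : coxeter.
Variable D : building C.
Notation W := (cW C).
Notation SS := (fun s => In s (cS C)).
Notation L := (L C).
Notation dl := (delta D).

Lemma adj_sym (x y : D) : In (dl x y) (cS C) -> dl y x = dl x y.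
Proof.
  intros Hs. destruct (WD2 D (s := dl x y) y x x Hs eq_refl) as [[E|E] _].
  - rewrite (proj2 (WD1 D x x) eq_refl) in E.
    apply (gmul_cancel_l (dl x y)). rewrite <- E. symmetry. apply cS_inv; auto.
  - rewrite (proj2 (WD1 D x x) eq_refl) in E. symmetry in E. apply (WD1 D) in E. subst.
    rewrite (proj2 (WD1 D x x) eq_refl) in Hs. exfalso. apply (cS_ne1 gone Hs). auto.
Qed.

Inductive gal : D -> D -> list W -> Prop :=
| gnil x : gal x x []
| gcons x y z l : In (dl x y) (cS C) -> gal y z l -> gal x z (dl x y :: l).

Lemma gal_of_word l : Forall SS l -> forall x y, gprod l = dl x y -> gal x y l.
Proof.
  induction l as [|s l IH]; simpl; intros Hl x y E.
  - symmetry in E. apply (WD1 D) in E. subst. constructor.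
  - inversion Hl; subst. destruct (WD3 D s x y H1) as [x' [E1 E2]].
    assert (E3 : dl x x' = s) by (rewrite <- E1; apply adj_sym; rewrite E1; auto).
    rewrite <- E3. constructor. rewrite E3; auto. apply IH; auto.
    rewrite E2, <- E, SK; auto.
Qed.

Lemma gal_S x y l : gal x y l -> Forall SS l.
Proof. induction 1; constructor; auto. Qed.

Lemma gal_red x y l : gal x y l -> length l = L (gprod l) -> dl x y = gprod l.
Proof.
  induction 1 as [x|x y z l Hs Hg IH]; intros E.
  - apply (WD1 D); auto.
  - assert (Hl := gal_S _ _ _ Hg).
    assert (E' := red_tail C (dl x y) l (ltac:(constructor; auto) : Forall SS (dl x y :: l)) E).
    specialize (IH E'). simpl. rewrite <- IH.
    destruct (WD2 D (s := dl x y) y z x Hs eq_refl) as [_ H].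
    apply (H (length l)). apply is_len_L. rewrite IH; auto.
    apply is_len_L. rewrite IH. simpl in E. rewrite <- E. auto.
Qed.

Lemma gal_app x y z l1 l2 : gal x y l1 -> gal y z l2 -> gal x z (l1 ++ l2).
Proof. induction 1; simpl; intros; auto. constructor; auto. Qed.

Lemma gal_rev x y l : gal x y l -> gal y x (rev l).
Proof.
  induction 1 as [x|x y z l Hs Hg IH]; simpl. constructor.
  apply gal_app with y; auto. rewrite <- (adj_sym x y Hs). constructor. rewrite adj_sym; auto. constructor.
Qed.

Lemma delta_inv (x y : D) : dl y x = ginv (dl x y).
Proof.
  destruct (redword C (dl x y)) as [l [H1 [H2 H3]]].
  assert (G := gal_of_word l H1 x y H3). apply gal_rev in G.
  rewrite (gal_red _ _ _ G). rewrite gprod_rev, H3; auto.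
  rewrite length_rev, gprod_rev, L_inv, H3; auto.
Qed.

Lemma gal_le_L (x y : D) n : gal_le D x y n <-> L (dl x y) <= n.
Proof.
  split.
  - induction 1 as [x n|x y z n Hs Hg IH].
    + rewrite (proj2 (WD1 D x x) eq_refl), L_one. lia.
    + destruct (WD2 D (s := dl x y) y z x Hs eq_refl) as [[E|E] _]; rewrite E.
      pose proof (L_mulS_l C _ (dl y z) Hs). lia. lia.
  - intros H. destruct (redword C (dl x y)) as [l [H1 [H2 H3]]].
    assert (G := gal_of_word l H1 x y H3). rewrite <- H2 in H. clear H2 H3 H1.
    revert n H. induction G as [x|x y z l Hs Hg IH]; intros n H. constructor.
    destruct n as [|n]. simpl in H; lia. apply gal_step with y; auto. apply IH. simpl in H; lia.
Qed.

Lemma gdist_L (x z y : D) : gdist_le x z y <-> L (dl x z) <= L (dl x y).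
Proof.
  unfold gdist_le. split; intros H.
  - apply gal_le_L, H, gal_le_L. lia.
  - intros n Hn. apply gal_le_L. apply gal_le_L in Hn. lia.
Qed.

Lemma res_shift (J : W -> Prop) : subS J -> forall l, Forall J l -> forall (c y : D), dl c y = gprod l ->
  forall z, exists u, inWJ J u /\ dl c z = gmul u (dl y z).
Proof.
  intros HJ l. induction l as [|s l IH]; simpl; intros Hl c y E z.
  - apply (WD1 D) in E. subst. exists gone. split. apply WJ_one. rewrite gmul1l; auto.
  - inversion Hl; subst. assert (Hs : In s (cS C)) by auto.
    destruct (WD3 D s c y Hs) as [c' [E1 E2]].
    rewrite E, SK in E2 by auto. destruct (IH H2 c' y E2 z) as [u [Hu Eu]].
    destruct (WD2 D (s := s) c z c' Hs E1) as [[F|F] _].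
    + exists (gmul s u). split. apply WJ_mul; auto. apply WJ_gen; auto.
      rewrite <- gmulA, <- Eu, F, SK; auto.
    + exists u. split; auto. rewrite <- F; auto.
Qed.

Lemma res_shift' (J : W -> Prop) : subS J -> forall (c y : D), inWJ J (dl c y) ->
  forall z, exists u, inWJ J u /\ dl c z = gmul u (dl y z).
Proof. intros HJ c y [l [Hl E]]. apply (res_shift J HJ l Hl c y); auto. Qed.

Lemma res_member (J : W -> Prop) (R : chset D) : subS J -> is_residue J R ->
  forall y, R y -> forall z, R z <-> inWJ J (dl y z).
Proof.
  intros HJ [c Hc] y Hy z. rewrite Hc. apply Hc in Hy.
  destruct (res_shift' J HJ c y Hy z) as [u [Hu E]]. rewrite E. split; intros H.
  - replace (dl y z) with (gmul (ginv u) (gmul u (dl y z))) by apply gmulKl.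
    apply WJ_mul; auto. apply WJ_inv; auto.
  - apply WJ_mul; auto.
Qed.

Lemma res_nonempty (J : W -> Prop) (R : chset D) : is_residue J R -> exists x, R x.
Proof.
  intros [c Hc]. exists c. apply Hc. rewrite (proj2 (WD1 D c c) eq_refl). exists []; auto.
Qed.
End Bld.

Section Main.
Variable C : coxeter.
Variable D : building C.
Notation W := (cW C).
Notation L := (L C).
Notation dl := (delta D).

Variables (I J : W -> Prop) (A B : chset D).
Hypotheses (HI : subS I) (HJ : subS J) (HA : is_residue I A) (HB : is_residue J B).

Lemma realize_l (x y : D) s : A x -> I s -> exists x', A x' /\ dl x' y = gmul s (dl x y).
Proof.
  intros Hx Hs. destruct (WD3 D s x y (HI s Hs)) as [x' [E1 E2]]. exists x'. split; auto.
  apply (res_member C D I A HI HA x Hx). rewrite adj_sym; rewrite E1; auto. apply WJ_gen; auto.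
Qed.
Lemma realize_r (x y : D) t : B y -> J t -> exists y', B y' /\ dl x y' = gmul (dl x y) t.
Proof.
  intros Hy Ht. destruct (WD3 D t y x (HJ t Ht)) as [y' [E1 E2]]. exists y'. split.
  apply (res_member C D J B HJ HB y Hy). rewrite adj_sym; rewrite E1; auto. apply WJ_gen; auto.
  rewrite delta_inv, E2, delta_inv, ginv_mul, ginv_ginv, (Sinv C t (HJ t Ht)). auto.
Qed.

Lemma dcoset (x x' y y' : D) : A x -> A x' -> B y -> B y' ->
  exists u v, inWJ I u /\ inWJ J v /\ dl x' y' = gmul (gmul u (dl x y)) v.
Proof.
  intros Hx Hx' Hy Hy'.
  assert (H1 : inWJ I (dl x' x)) by (apply (res_member C D I A HI HA x'); auto).
  destruct (res_shift' C D I HI x' x H1 y') as [u [Hu E1]].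
  assert (H2 : inWJ J (dl y' y)) by (apply (res_member C D J B HJ HB y'); auto).
  destruct (res_shift' C D J HJ y' y H2 x) as [v [Hv E2]].
  exists u, (ginv v). split; auto. split. apply WJ_inv; auto.
  rewrite E1, (delta_inv C D y' x), E2, ginv_mul, <- (delta_inv C D y x), gmulA. auto.
Qed.

Lemma min_red w : is_min_delta A B w -> lred C I w /\ rred C J w.
Proof.
  intros [[x [y [Hx [Hy E]]]] Hmin]. split.
  - intros s Hs. destruct (realize_l x y s Hx Hs) as [x' [H1 H2]].
    assert (ell_le w (gmul s w)) by (apply Hmin; exists x', y; rewrite H2, E; auto).
    apply ell_le_L in H. destruct (L_par_l C s w (HI s Hs)); lia.
  - intros t Ht. destruct (realize_r x y t Hy Ht) as [y' [H1 H2]].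
    assert (ell_le w (gmul w t)) by (apply Hmin; exists x, y'; rewrite H2, E; auto).
    apply ell_le_L in H. destruct (L_par_r C t w (HJ t Ht)); lia.
Qed.

Lemma min_unique w1 w2 : is_min_delta A B w1 -> is_min_delta A B w2 -> w1 = w2.
Proof.
  intros H1 H2. destruct (min_red w1 H1) as [Hl1 Hr1]. destruct (min_red w2 H2) as [Hl2 Hr2].
  destruct H1 as [[x [y [Hx [Hy E1]]]] _]. destruct H2 as [[x' [y' [Hx' [Hy' E2]]]] _].
  destruct (dcoset x x' y y' Hx Hx' Hy Hy') as [u [v [Hu [Hv E]]]].
  apply (DC C I J HI HJ w1 w2 Hl1 Hr1 Hl2 Hr2 u (ginv v) Hu (WJ_inv C J HJ v Hv)).
  rewrite <- E1, <- E2, E, gmulKl'. auto.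
Qed.

Lemma min_exists : (exists w, delta_set A B w) -> exists w, is_min_delta A B w.
Proof.
  intros H. destruct (min_nat (fun n => exists w, delta_set A B w /\ L w = n)) as [n [[w [Hw E]] Hmin]].
  { destruct H as [w Hw]. exists (L w), w; auto. }
  exists w. split; auto. intros w' Hw'. apply ell_le_L. rewrite E. apply Hmin. exists w'; auto.
Qed.

Lemma proj_min (x : D) : proj_set A B x -> exists y, B y /\ is_min_delta A B (dl x y).
Proof.
  intros [b [Hb [Hx Hproj]]].
  set (w := dl x b).
  assert (Hlw : lred C I w).
  { intros s Hs. destruct (realize_l x b s Hx Hs) as [x' [H1 H2]].
    specialize (Hproj x' H1). apply gdist_L in Hproj.
    rewrite (delta_inv C D x' b), (delta_inv C D x b), !L_inv, H2 in Hproj. fold w in Hproj.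
    destruct (L_par_l C s w (HI s Hs)); lia. }
  destruct (min_nat (fun n => exists y, B y /\ L (dl x y) = n)) as [n [[y [Hy Ey]] Hmin]].
  { exists (L (dl x b)), b; auto. }
  set (d := dl x y) in *.
  assert (Hrd : rred C J d).
  { intros t Ht. destruct (realize_r x y t Hy Ht) as [y' [H1 H2]].
    assert (n <= L (gmul d t)) by (apply Hmin; exists y'; rewrite H2; auto).
    destruct (L_par_r C t d (HJ t Ht)); lia. }
  assert (H2 : inWJ J (dl y b)) by (apply (res_member C D J B HJ HB y); auto).
  destruct (res_shift' C D J HJ y b H2 x) as [v [Hv Ev]].
  assert (Ew : w = gmul d v).
  { unfold w, d. rewrite (delta_inv C D b x), (delta_inv C D y x), Ev, ginv_mul, gmulKr'. auto. }
  assert (Hld : lred C I d).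
  { intros s Hs. destruct (L_par_l C s d (HI s Hs)) as [E|E]; [lia|exfalso].
    assert (K1 := C3 C J HJ d Hrd v Hv). rewrite <- Ew in K1.
    assert (K2 := Hlw s Hs). rewrite Ew, gmulA in K2.
    pose proof (L_mul C (gmul s d) v). rewrite <- Ew in K2. lia. }
  destruct (min_exists) as [d0 Hd0].
  { exists d, x, y; auto. }
  exists y. split; auto. fold d.
  assert (Hdd : d0 = d).
  { destruct (min_red d0 Hd0) as [Hl0 Hr0].
    destruct Hd0 as [[x0 [y0 [Hx0 [Hy0 E0]]]] _].
    destruct (dcoset x0 x y0 y Hx0 Hx Hy0 Hy) as [u [v' [Hu [Hv' E]]]].
    apply (DC C I J HI HJ d0 d Hl0 Hr0 Hld Hrd u (ginv v') Hu (WJ_inv C J HJ v' Hv')).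
    rewrite <- E0. unfold d. rewrite E, gmulKl'. auto. }
  rewrite <- Hdd. auto.
Qed.
End Main.

Section Final.
Variable C : coxeter.
Variable D : building C.
Variable G : group.
Variable act : G -> D -> D.
Hypothesis Hact : is_action act.
Hypothesis Htp : type_preserving act.

Lemma act_inv_l g x : act (ginv g) (act g x) = x.
Proof. destruct Hact as [H1 H2]. rewrite <- H2, gmulVl, H1. auto. Qed.
Lemma act_inv_r g x : act g (act (ginv g) x) = x.
Proof. destruct Hact as [H1 H2]. rewrite <- H2, gmulVr, H1. auto. Qed.

Lemma imgP g (X Y : chset D) : set_eq (img act g X) Y <-> forall u, X u <-> Y (act g u).
Proof.
  split; intros H.
  - intros u. split; intros Hu.
    + apply H. exists u; auto.
    + apply H in Hu. destruct Hu as [x [Hx E]]. apply (f_equal (act (ginv g))) in E.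
      rewrite !act_inv_l in E. subst; auto.
  - intros z. split.
    + intros [x [Hx <-]]. apply H; auto.
    + intros Hz. exists (act (ginv g) z). rewrite act_inv_r. split; auto. apply H. rewrite act_inv_r; auto.
Qed.

Lemma transport (J : cW C -> Prop) (R R' : chset D) c c' g : subS J -> is_residue J R -> is_residue J R' ->
  R c -> R' c' -> act g c = c' -> set_eq (img act g R) R'.
Proof.
  intros HJ HR HR' Hc Hc' E. apply imgP. intros u.
  rewrite (res_member C D J R HJ HR c Hc u), (res_member C D J R' HJ HR' c' Hc' (act g u)).
  rewrite <- E, Htp. tauto.
Qed.
End Final.

Theorem lemma4p1 (C : coxeter) (D : building C) (G : group) (act : G -> D -> D)
  (Hact : is_action act) (Htp : type_preserving act) (Hwt : weyl_transitive act)
  (A B : chset D) (HA : simplex A) (HB : simplex B) :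
  (forall R R' : chset D,
     simplex R -> same_type R A -> same_min_delta B R B A ->
     simplex R' -> same_type R' A -> same_min_delta B R' B A ->
     exists g, stab act B g /\ set_eq (img act g R) R') /\
  (forall x x', proj_set A B x -> proj_set A B x' ->
     exists g, stab act A g /\ stab act B g /\ act g x = x') /\
  (forall y y', proj_set B A y -> proj_set B A y' ->
     exists g, stab act A g /\ stab act B g /\ act g y = y') /\
  (forall x y x' y',
     proj_set A B x -> proj_set B A y -> is_min_delta A B (delta D x y) ->
     proj_set A B x' -> proj_set B A y' -> is_min_delta A B (delta D x' y') ->
     exists g, stab act A g /\ stab act B g /\ act g x = x' /\ act g y = y').
Proof.
  destruct HA as [I [HI [_ HAr]]]. destruct HB as [J [HJ [_ HBr]]].
  assert (Hproj : forall (A' : chset D) (J' : cW C -> Prop) x, subS J' -> is_residue J' A' -> proj_set A' B x -> A' x).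
  { intros. destruct H1 as [b [_ [H1 _]]]. auto. }
  assert (Pair : forall x y x' y', A x -> B y -> A x' -> B y' -> delta D x y = delta D x' y' ->
            exists g, stab act A g /\ stab act B g /\ act g x = x' /\ act g y = y').
  { intros x y x' y' Hx Hy Hx' Hy' E. destruct (Hwt x y x' y' E) as [g [E1 E2]].
    exists g. split. apply (transport C D G act Hact Htp I A A x x' g); auto.
    split; auto. apply (transport C D G act Hact Htp J B B y y' g); auto. }
  split; [|split; [|split]].
  - intros R R' _ [J1 [HJ1 [_ [HR1 HA1]]]] [w [Hw1 Hw2]] _ [J2 [HJ2 [_ [HR2 HA2]]]] [w' [Hw1' Hw2']].
    destruct Hw1 as [[b [r [Hb [Hr E]]]] _]. destruct Hw2 as [[b1 [a1 [Hb1 [Ha1 E1]]]] _].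
    destruct Hw1' as [[b' [r' [Hb' [Hr' E']]]] _]. destruct Hw2' as [[b2 [a2 [Hb2 [Ha2 E2]]]] _].
    destruct (Hwt b r b1 a1 (eq_trans E (eq_sym E1))) as [g1 [F1 F2]].
    destruct (Hwt b' r' b2 a2 (eq_trans E' (eq_sym E2))) as [g2 [G1 G2]].
    assert (S1 := transport C D G act Hact Htp J B B b b1 g1 HJ HBr HBr Hb Hb1 F1).
    assert (T1 := transport C D G act Hact Htp J1 R A r a1 g1 HJ1 HR1 HA1 Hr Ha1 F2).
    assert (S2 := transport C D G act Hact Htp J B B b' b2 g2 HJ HBr HBr Hb' Hb2 G1).
    assert (T2 := transport C D G act Hact Htp J2 R' A r' a2 g2 HJ2 HR2 HA2 Hr' Ha2 G2).
    exists (gmul (ginv g2) g1). unfold stab.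
    rewrite imgP in S1, T1, S2, T2 |- * by auto. rewrite imgP by auto.
    assert (Hact0 := Hact). destruct Hact as [_ Hm]. split; intros u; rewrite Hm.
    + rewrite (S1 u), (S2 (act (ginv g2) (act g1 u))), (act_inv_r C D G act Hact0). tauto.
    + rewrite (T1 u), (T2 (act (ginv g2) (act g1 u))), (act_inv_r C D G act Hact0). tauto.
  - intros x x' Hx Hx'.
    destruct (proj_min C D I J A B HI HJ HAr HBr x Hx) as [y [Hy Hm]].
    destruct (proj_min C D I J A B HI HJ HAr HBr x' Hx') as [y' [Hy' Hm']].
    destruct (Pair x y x' y') as [g [H1 [H2 [H3 _]]]]; auto.
    destruct Hx as [b [_ [Hx _]]]; auto. destruct Hx' as [b [_ [Hx' _]]]; auto.
    apply (min_unique C D I J A B HI HJ HAr HBr); auto.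
    exists g; auto.
  - intros y y' Hy Hy'.
    destruct (proj_min C D J I B A HJ HI HBr HAr y Hy) as [x [Hx Hm]].
    destruct (proj_min C D J I B A HJ HI HBr HAr y' Hy') as [x' [Hx' Hm']].
    assert (Ey : B y) by (destruct Hy as [b [_ [H _]]]; auto).
    assert (Ey' : B y') by (destruct Hy' as [b [_ [H _]]]; auto).
    destruct (Pair x y x' y') as [g [H1 [H2 [_ H4]]]]; auto.
    rewrite (delta_inv C D y x), (delta_inv C D y' x'). f_equal.
    apply (min_unique C D J I B A HJ HI HBr HAr); auto.
    exists g; auto.
  - intros x y x' y' Hx Hy Hm Hx' Hy' Hm'.
    apply Pair.
    destruct Hx as [b [_ [H _]]]; auto. destruct Hy as [b [_ [H _]]]; auto.
    destruct Hx' as [b [_ [H _]]]; auto. destruct Hy' as [b [_ [H _]]]; auto.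
    apply (min_unique C D I J A B HI HJ HAr HBr); auto.
Qed.
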